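(* Let $q$ be a power of an odd prime, $0<r_1<r_2<\cdots<r_k<n$ integers, $a_1,\dots,a_k\in\mathbb{F}_{q^n}^*$, $S(x)=\sum_{i=1}^k a_ix^{q^{r_i}}$, and $0<t<n$. (1) If $0<t<r_1$ and the multiplicative order of each $a_i$ ($i=1,\dots,k$) divides $q^t-1$, then $S(x)$ is a scattered polynomial of index $t$ over $\mathbb{F}_{q^n}$ if and only if $S^t(x)=\sum_{i=1}^k a_ix^{q^{r_i-t}}$ is a scattered polynomial of index $0$ over $\mathbb{F}_{q^n}$. (2) If $r_1<t<n$ and the multiplicative order of each $a_i$ ($i=1,\dots,k$) divides $q^{r_1}-1$, then $S(x)$ is a scattered polynomial of index $t$ over $\mathbb{F}_{q^n}$ if and only if $T(x)=a_1x+\sum_{i=2}^k a_ix^{q^{r_i-r_1}}$ is a scattered polynomial of index $t-r_1$ over $\mathbb{F}_{q^n}$.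
   Context: An $\mathbb{F}_q$-linearized polynomial $S\in\mathbb{F}_{q^n}[x]$ is a scattered polynomial of index $t$ over $\mathbb{F}_{q^n}$ if for all $y,z\in\mathbb{F}_{q^n}^*$, $\frac{S(y)}{y^{q^t}}=\frac{S(z)}{z^{q^t}}$ implies $y/z\in\mathbb{F}_q$. *)

(* Defs.v *)
From mathcomp Require Import all_boot all_order all_algebra all_fingroup all_field.
Set Implicit Arguments. Unset Strict Implicit. Unset Printing Implicit Defensive.
Import GRing.Theory.
Local Open Scope ring_scope.

(* Multiplicative order of an element of a finite field: the order of the
   corresponding element of the unit group {unit L}; 0 for a = 0 (never used). *)
Definition morder (L : finFieldType) (a : L) : nat :=
  match insub a : option {unit L} with
  | Some u => #[u]%g
  | None => 0%N
  end.

Definition in_Fq (L : finFieldType) (q : nat) (x : L) : bool := x ^+ q == x.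

Definition scattered (L : finFieldType) (q : nat) (f : L -> L) (t : nat) : Prop :=
  forall y z : L, y != 0 -> z != 0 ->
    f y / y ^+ (q ^ t) = f z / z ^+ (q ^ t) -> in_Fq q (y / z).

(* Main.v *)
Require Import Defs.
From mathcomp Require Import all_boot all_order all_algebra all_fingroup all_field.
Local Open Scope ring_scope.
Import GRing.Theory FinRing.Theory.

Section Aux.
Variable L : finFieldType.
Variable p : nat.
Hypothesis pchL : p \in [pchar L].
Hypothesis pr : prime p.

Lemma frobD e (x y : L) : (x + y) ^+ (p ^ e) = x ^+ (p ^ e) + y ^+ (p ^ e).
Proof. by apply: exprDn_pchar; rewrite pnatX (pnatE _ pr) pchL. Qed.

Lemma frob0 e : (0 : L) ^+ (p ^ e) = 0.
Proof. by rewrite expr0n eqn0Ngt expn_gt0 prime_gt0. Qed.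

Lemma frob_inj e (x y : L) : x ^+ (p ^ e) = y ^+ (p ^ e) -> x = y.
Proof.
move=> h; have : (x - y) ^+ (p ^ e) = 0.
  have := frobD e (x - y) y; rewrite subrK h => /eqP.
  by rewrite -subr_eq subrr eq_sym => /eqP.
by move/eqP; rewrite expf_eq0 subr_eq0 => /andP [_ /eqP].
Qed.

Lemma frob_sum e (I : finType) (P : pred I) (F : I -> L) :
  (\sum_(i | P i) F i) ^+ (p ^ e) = \sum_(i | P i) F i ^+ (p ^ e).
Proof. exact: (big_morph (fun x => x ^+ (p ^ e)) (frobD e) (frob0 e)). Qed.

Lemma transfer q t s e (S G : L -> L) :
  (forall y, S y = G y ^+ (p ^ e)) ->
  (forall y : L, y ^+ (q ^ t) = (y ^+ (q ^ s)) ^+ (p ^ e)) ->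
  scattered q S t <-> scattered q G s.
Proof.
move=> hS hq.
have E : forall y, S y / y ^+ (q ^ t) = (G y / y ^+ (q ^ s)) ^+ (p ^ e).
  by move=> y; rewrite hS hq exprMn exprVn.
split=> h y z yn zn hyz; apply: h => //.
  by rewrite !E hyz.
by apply: (frob_inj e); rewrite -!E.
Qed.
End Aux.

Lemma fixa (L : finFieldType) (a : L) N :
  a != 0 -> (0 < N)%N -> (morder a %| N - 1)%N -> a ^+ N = a.
Proof.
move=> an Np; rewrite /morder; case: insubP => [u _ ua|]; last first.
  by rewrite unitfE an.
case/dvdnP=> k hk.
have -> : N = (N - 1).+1 by rewrite subn1 prednK.
rewrite exprS hk mulnC exprM -ua -val_unitX expg_order val_unit1 expr1n mulr1.
by [].
Qed.

Theorem mainTheorem6 (L : finFieldType) (p m n k : nat)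
  (r : 'I_k.+1 -> nat) (a : 'I_k.+1 -> L) (t : nat) :
  prime p -> odd p -> (0 < m)%N ->
  #|L| = ((p ^ m) ^ n)%N ->
  (forall i, 0 < r i)%N ->
  (forall i j : 'I_k.+1, (i < j)%N -> (r i < r j)%N) ->
  (forall i, r i < n)%N ->
  (forall i, a i != 0) ->
  (0 < t)%N -> (t < n)%N ->
  let q := (p ^ m)%N in
  let S := fun y : L => \sum_(i < k.+1) a i * y ^+ (q ^ r i) in
  ((t < r ord0)%N -> (forall i, morder (a i) %| q ^ t - 1)%N ->
     (scattered q S t <->
      scattered q (fun y => \sum_(i < k.+1) a i * y ^+ (q ^ (r i - t))) 0))
  /\
  ((r ord0 < t)%N -> (forall i, morder (a i) %| q ^ r ord0 - 1)%N ->
     (scattered q S t <->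
      scattered q (fun y => a ord0 * y
                     + \sum_(i < k.+1 | i != ord0) a i * y ^+ (q ^ (r i - r ord0)))
                (t - r ord0))).
Proof.
move=> pr _ m0 cL r0 rinc rn an t0 tn q S.
have pch : p \in [pchar L] by apply: (card_finPcharP (n := (m * n)%N)) => //; rewrite expnM.
have r0le : forall i, (r ord0 <= r i)%N.
  move=> i; case: (posnP i) => [i0|ip].
    by have -> : i = ord0 by apply: val_inj.
  exact: ltnW (rinc ord0 i ip).
have qE : forall s, (q ^ s = p ^ (m * s))%N by move=> s; rewrite /q expnM.
have qpos : forall s, (0 < q ^ s)%N by move=> s; rewrite expn_gt0 /q expn_gt0 prime_gt0.
split.
- move=> tr ha.
  apply: (@transfer _ _ pch pr _ _ _ (m * t)%N).
    move=> y; rewrite /S (@frob_sum _ _ pch pr); apply: eq_bigr => i _.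
    rewrite exprMn -qE (@fixa _ _ _ (an i) (qpos _) (ha i)) -exprM -expnD subnK //.
    exact: leq_trans (ltnW tr) (r0le i).
  by move=> y; rewrite expn0 expr1 -qE.
- move=> tr ha.
  apply: (@transfer _ _ pch pr _ _ _ (m * r ord0)%N).
    move=> y; rewrite /S (bigD1 ord0) //= (@frobD _ _ pch pr) (@frob_sum _ _ pch pr).
    congr (_ + _).
      by rewrite exprMn -qE (@fixa _ _ _ (an ord0) (qpos _) (ha ord0)).
    apply: eq_bigr => i _.
    by rewrite exprMn -qE (@fixa _ _ _ (an i) (qpos _) (ha i)) -exprM -expnD subnK //; exact: r0le.
  by move=> y; rewrite -qE -exprM -expnD (subnK (ltnW tr)).
Qed.
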